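(* Let $s\geq 3$ and let $G\in\mathcal{G}_{3}(s)$. Then $G$ is a maximal $3$-$\gamma_{c}$-vertex critical graph.
   Context: All graphs are finite and simple. A set $D\subseteq V(G)$ is a connected dominating set of $G$ if every vertex of $G$ is in $D$ or adjacent to a vertex of $D$, and $G[D]$ is connected; $\gamma_{c}(G)$ is the minimum cardinality of such a set. $G$ is $k$-$\gamma_{c}$-edge critical if $\gamma_{c}(G)=k$ and $\gamma_{c}(G+uv)<k$ for every pair of non-adjacent vertices $u,v$. A $2$-connected graph $G$ is $k$-$\gamma_{c}$-vertex critical if $\gamma_{c}(G)=k$ and $\gamma_{c}(G-v)<k$ for every $v\in V(G)$. $G$ is maximal $k$-$\gamma_{c}$-vertex critical if it is both $k$-$\gamma_{c}$-edge critical and $k$-$\gamma_{c}$-vertex critical. For $s\geq 3$, $\mathcal{G}_{3}(s)$ is the class of graphs (unique up to isomorphism) with vertex set $R\cup T\cup W\cup Z$, where $R=\{r_1,\dots,r_s\}$, $T=\{t_1,\dots,t_s\}$, $W=\{w_1,\dots,w_s\}$, $Z=\{z_1,\dots,z_s\}$ are pairwise disjoint, and whose edges are exactly: for each $1\leq i\leq s$, $r_i$ is joined to every vertex of $(T\cup W)\setminus\{t_i\}$, $t_i$ is joined to every vertex of $(W\cup Z)\setminus\{w_i\}$, and $w_i$ is joined to every vertex of $Z\setminus\{z_i\}$; in addition $R$ and $Z$ each induce a clique. (No other edges; in particular $T$ and $W$ are independent sets.) *)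

(* Defs.v *)
(* Finite simple graphs as symmetric irreflexive relations on a finType. *)
From mathcomp Require Import all_boot.
Set Implicit Arguments. Unset Strict Implicit. Unset Printing Implicit Defensive.

Section Graphs.
Variable T : finType.

Definition induced_connected (e : rel T) (D : {set T}) : Prop :=
  D != set0 /\
  forall x y, x \in D -> y \in D ->
    connect (fun a b => [&& e a b, a \in D & b \in D]) x y.

Definition is_cds (e : rel T) (S D : {set T}) : Prop :=
  D \subset S /\
  (forall v, v \in S -> v \in D \/ exists2 d, d \in D & e v d) /\
  induced_connected e D.

Definition gamma_c_is (e : rel T) (S : {set T}) (k : nat) : Prop :=
  (exists D, is_cds e S D /\ #|D| = k) /\
  (forall D, is_cds e S D -> k <= #|D|).

Definition add_edge (e : rel T) (u v : T) : rel T :=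
  fun x y => [|| e x y, (x == u) && (y == v) | (x == v) && (y == u)].

Definition edge_critical (e : rel T) (k : nat) : Prop :=
  gamma_c_is e setT k /\
  forall u v, u != v -> ~~ e u v ->
    exists2 k', k' < k & gamma_c_is (add_edge e u v) setT k'.

Definition two_connected (e : rel T) : Prop :=
  2 < #|T| /\ induced_connected e setT /\
  forall v, induced_connected e (setT :\ v).

Definition vertex_critical (e : rel T) (k : nat) : Prop :=
  two_connected e /\ gamma_c_is e setT k /\
  forall v, exists2 k', k' < k & gamma_c_is e (setT :\ v) k'.

Definition maximal_vertex_critical (e : rel T) (k : nat) : Prop :=
  edge_critical e k /\ vertex_critical e k.

End Graphs.

(* The graph of G_3(s): vertex (p, i) with p = 0,1,2,3 for R,T,W,Z and index i. *)
Definition g3_dir (s : nat) (x y : 'I_4 * 'I_s) : bool :=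
  let p := nat_of_ord x.1 in let q := nat_of_ord y.1 in
  let i := x.2 in let j := y.2 in
  [|| [&& p == 0, q == 1 & i != j],
      (p == 0) && (q == 2),
      [&& p == 1, q == 2 & i != j],
      (p == 1) && (q == 3),
      [&& p == 2, q == 3 & i != j],
      (p == 0) && (q == 0)
    | (p == 3) && (q == 3)].

Arguments g3_dir s x y : clear implicits.

Definition g3 (s : nat) : rel ('I_4 * 'I_s) :=
  fun x y => (x != y) && (g3_dir s x y || g3_dir s y x).
Arguments g3 s x y : clear implicits.

(* Main.v *)
Require Import Defs.
From mathcomp Require Import all_boot.
From Stdlib Require Import Classical.
Set Implicit Arguments. Unset Strict Implicit. Unset Printing Implicit Defensive.

Lemma card3_le (T : finType) (a b c : T) : #|[set a; b; c]| <= 3.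
Proof.
apply: (leq_trans (leq_card_setU _ _)); rewrite cards1 addn1 ltnS.
apply: (leq_trans (leq_card_setU _ _)); by rewrite !cards1.
Qed.

Lemma card2_le (T : finType) (a b : T) : #|[set a; b]| <= 2.
Proof. by rewrite cards2; case: (a != b). Qed.

Lemma gamma_exists (T : finType) (e : rel T) (S D : {set T}) :
  is_cds e S D -> exists2 k, k <= #|D| & gamma_c_is e S k.
Proof.
move: {2}#|D| (leqnn #|D|) => n; elim: n D => [|n IH] D hD cD.
  case: (classic (exists D', is_cds e S D' /\ #|D'| < #|D|)) => [[D' [_ hD']]|nD].
    by move: (leq_trans hD' hD).
  exists #|D| => //; split; first by exists D.
  by move=> D' cD'; rewrite leqNgt; apply/negP => h; apply: nD; exists D'.
case: (classic (exists D', is_cds e S D' /\ #|D'| < #|D|)) => [[D' [cD' hD']]|nD].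
  have [k hk gk] := IH D' (leq_trans hD' hD) cD'.
  by exists k => //; apply: leq_trans hk (ltnW hD').
exists #|D| => //; split; first by exists D.
by move=> D' cD'; rewrite leqNgt; apply/negP => h; apply: nD; exists D'.
Qed.

Lemma star_conn (T : finType) (e : rel T) (D : {set T}) h : symmetric e -> h \in D ->
  (forall x, x \in D -> (x == h) || e x h) -> induced_connected e D.
Proof.
move=> se hD st; split; first by apply/set0Pn; exists h.
have toh : forall x, x \in D -> connect (fun a b => [&& e a b, a \in D & b \in D]) x h.
  move=> x xD; case/orP: (st x xD) => [/eqP->|exh]; first exact: connect0.
  by apply: connect1; rewrite exh xD hD.
have sy : connect_sym (fun a b => [&& e a b, a \in D & b \in D]).
  apply: sym_connect_sym => a b; by rewrite se; case: (a \in D); case: (b \in D); rewrite ?andbF.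
move=> x y xD yD; apply: connect_trans (toh x xD) _; rewrite sy; exact: toh.
Qed.

Lemma cds_conn (T : finType) (e : rel T) (S D : {set T}) : symmetric e -> is_cds e S D ->
  induced_connected e S.
Proof.
move=> se [sDS [dom [nD cD]]].
have [d dD] := set0Pn _ nD.
split; first by apply/set0Pn; exists d; apply: (subsetP sDS).
set eS := (fun a b => [&& e a b, a \in S & b \in S]).
have sy : connect_sym eS.
  apply: sym_connect_sym => a b; by rewrite /eS se; case: (a \in S); case: (b \in S); rewrite ?andbF.
have toD : forall x, x \in S -> exists2 d, d \in D & connect eS x d.
  move=> x xS; case: (dom x xS) => [xD|[d' d'D xd']]; first by exists x => //; exact: connect0.
  exists d' => //; apply: connect1; by rewrite /eS xd' xS (subsetP sDS).
have inD : forall d1 d2, d1 \in D -> d2 \in D -> connect eS d1 d2.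
  move=> d1 d2 h1 h2; apply: (connect_sub _ (cD d1 d2 h1 h2)) => a b /and3P[ab aD bD].
  by apply: connect1; rewrite /eS ab !(subsetP sDS).
move=> x y xS yS; have [dx dxD hx] := toD x xS; have [dy dyD hy] := toD y yS.
apply: connect_trans hx _; apply: connect_trans (inD _ _ dxD dyD) _; by rewrite sy.
Qed.

Lemma cds2 (T : finType) (e : rel T) (S : {set T}) (a b : T) : symmetric e ->
  a \in S -> b \in S -> e b a ->
  (forall v, v \in S -> [|| v == a, v == b, e v a | e v b]) -> is_cds e S [set a; b].
Proof.
move=> se aS bS ba dom; split.
  by apply/subsetP => x; rewrite !inE => /orP[]/eqP->.
split.
  move=> v vS; case/or4P: (dom v vS) => [/eqP->|/eqP->|va|vb].
  - by left; rewrite !inE eqxx.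
  - by left; rewrite !inE eqxx orbT.
  - by right; exists a => //; rewrite !inE eqxx.
  - by right; exists b => //; rewrite !inE eqxx orbT.
apply: (star_conn (h := a)) => //; first by rewrite !inE eqxx.
by move=> x; rewrite !inE => /orP[]/eqP->; rewrite ?eqxx ?ba ?orbT.
Qed.

Lemma cds3 (T : finType) (e : rel T) (a b c : T) : symmetric e ->
  e a b -> e c b ->
  (forall v, [|| v == a, v == b, v == c, e v a, e v b | e v c]) -> is_cds e setT [set a; b; c].
Proof.
move=> se ab cb dom; split; first exact: subsetT.
split.
  move=> v _; case/or4P: (dom v) => [/eqP->|/eqP->|/eqP->|/orP[va|/orP[vb|vc]]].
  - by left; rewrite !inE eqxx.
  - by left; rewrite !inE eqxx !orbT.
  - by left; rewrite !inE eqxx !orbT.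
  - by right; exists a => //; rewrite !inE eqxx.
  - by right; exists b => //; rewrite !inE eqxx !orbT.
  - by right; exists c => //; rewrite !inE eqxx !orbT.
apply: (star_conn (h := b)) => //; first by rewrite !inE eqxx orbT.
by move=> x; rewrite !inE => /orP[/orP[]|]/eqP->; rewrite ?eqxx ?ab ?cb ?orbT.
Qed.

Lemma connect_step (T : finType) (r : rel T) x y : connect r x y -> x != y -> exists z, r x z.
Proof.
case/connectP => [[|z p]] /=; first by move=> _ ->; rewrite eqxx.
by case/andP => rz _ _ _; exists z.
Qed.

Lemma add_edge_sym (T : finType) (e : rel T) u v : symmetric e -> symmetric (add_edge e u v).
Proof.
move=> se x y; rewrite /add_edge se.
by move: (e y x) (x == u) (x == v) (y == u) (y == v) => [] [] [] [] [].
Qed.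

Definition pR : 'I_4 := @Ordinal 4 0 isT.
Definition pT : 'I_4 := @Ordinal 4 1 isT.
Definition pW : 'I_4 := @Ordinal 4 2 isT.
Definition pZ : 'I_4 := @Ordinal 4 3 isT.
Lemma ordE (p q : 'I_4) : (p == q) = (nat_of_ord p == nat_of_ord q). Proof. by []. Qed.
Lemma neq_sym (T : eqType) (x y : T) : x != y -> y != x. Proof. by rewrite eq_sym. Qed.

Lemma g3_sym s : symmetric (g3 s).
Proof. by move=> x y; rewrite /g3 eq_sym orbC. Qed.
Lemma g3_irr s x : g3 s x x = false.
Proof. by rewrite /g3 eqxx. Qed.

Lemma other2 s (Hs : 2 < s) (i j : 'I_s) : exists k : 'I_s, (k != i) && (k != j).
Proof.
have h0 : 0 < s by apply: leq_trans Hs.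
have h1 : 1 < s by apply: leq_trans Hs.
case E0: ((Ordinal h0 != i) && (Ordinal h0 != j)); first by exists (Ordinal h0).
case E1: ((Ordinal h1 != i) && (Ordinal h1 != j)); first by exists (Ordinal h1).
exists (Ordinal Hs); move: E0 E1; rewrite -!val_eqE /=.
by case: (nat_of_ord i) => [|[|[|?]]]; case: (nat_of_ord j) => [|[|[|?]]].
Qed.

Ltac simp := rewrite /add_edge /g3 /g3_dir /= ?xpair_eqE ?ordE /=.
Ltac split_all := repeat match goal with
 | x : ?A, y : ?B |- _ =>
   let _ := constr:(nat_of_ord x) in let _ := constr:(nat_of_ord y) in
   let _ := constr:(x == y) in
   lazymatch goal with
   | _ : is_true (x != y) |- _ => fail
   | _ : is_true (y != x) |- _ => fail
   | _ => tryif (constr_eq x y) then fail else (case: (eqVneq x y) => [?|?]; [subst x|])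
   end
 end.
Ltac fin := try (match goal with H : is_true (?x != ?x) |- _ => by rewrite eqxx in H end);
  repeat match goal with H : is_true (?x != ?y) |- _ =>
    rewrite ?(negbTE H) ?(negbTE (neq_sym H)); clear H end; rewrite ?eqxx; by [].

Lemma lower_core s (Hs : 2 < s) (a b : 'I_4 * 'I_s) :
  (forall v, [|| v == a, v == b, g3 s v a | g3 s v b]) -> (a == b) || g3 s a b -> False.
Proof.
case: a => [[[|[|[|[|?]]]] Hp] i] //; case: b => [[[|[|[|[|?]]]] Hq] j] // => dom conn;
have [k /andP[ki kj]] := other2 Hs i j;
move: conn (dom (pR,k)) (dom (pT,k)) (dom (pW,k)) (dom (pZ,k))
  (dom (pR,i)) (dom (pT,i)) (dom (pW,i)) (dom (pZ,i))
  (dom (pR,j)) (dom (pT,j)) (dom (pW,j)) (dom (pZ,j)); clear dom; simp; split_all; fin.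
Qed.

Lemma lower s (Hs : 2 < s) (D : {set 'I_4 * 'I_s}) : is_cds (g3 s) setT D -> 3 <= #|D|.
Proof.
move=> [_ [dom [nD cD]]]; rewrite leqNgt; apply/negP => small.
have [a aD] := set0Pn _ nD.
have [b [bD inab]] : exists b, b \in D /\ forall c, c \in D -> (c == a) || (c == b).
  case: (pickP (fun b => (b \in D) && (b != a))) => [b /andP[bD ba]|none].
    exists b; split => // c cD0; apply/negPn/negP; rewrite negb_or => /andP[ca cb].
    move: small; rewrite (cardsD1 a) aD (cardsD1 b (D :\ a)) !inE ba bD.
    by rewrite (cardsD1 c) !inE ca cb cD0.
  exists a; split => // c cD0; move: (none c); rewrite cD0 /= => /negbFE ->.
  by [].
apply: (lower_core Hs (a := a) (b := b)).
  move=> v; case: (dom v (in_setT v)) => [vD|[d dD vd]].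
    by case/orP: (inab v vD) => ->; rewrite ?orbT.
  by case/orP: (inab d dD) => /eqP <-; rewrite vd ?orbT.
case: (eqVneq a b) => //= ab.
have [z /and3P[az _ zD]] := connect_step (cD a b aD bD) ab.
case/orP: (inab z zD) => /eqP zE; first by rewrite zE g3_irr in az.
by rewrite -zE.
Qed.

Lemma gamma3 s (Hs : 2 < s) : gamma_c_is (g3 s) setT 3 /\ exists D, is_cds (g3 s) setT D.
Proof.
have h0 : 0 < s by apply: leq_trans Hs.
move: (Ordinal h0) => i; have [j /andP[ji _]] := other2 Hs i i.
have cD : is_cds (g3 s) setT [set (pR, i); (pT, j); (pZ, i)].
  apply: cds3; first exact: g3_sym.
  - by simp; rewrite eq_sym ji.
  - by simp.
  move=> [[[|[|[|[|?]]]] Hp] k] //; simp; split_all; fin.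
split; last by exists [set (pR, i); (pT, j); (pZ, i)].
have [k hk gk] := gamma_exists cD.
have := leq_trans hk (card3_le _ _ _) => k3.
have [[D [cD' eD]] _] := gk.
have := lower Hs cD'; rewrite eD => k3'.
have keq : k = 3 by apply/eqP; rewrite eqn_leq k3 k3'.
by rewrite keq in gk.
Qed.

Lemma ex_small (T : finType) (e : rel T) (S : {set T}) :
  (exists D, is_cds e S D /\ #|D| <= 2) -> exists2 k', k' < 3 & gamma_c_is e S k'.
Proof.
move=> [D [cD hD]]; have [k hk gk] := gamma_exists cD.
by exists k => //; apply: leq_ltn_trans hk _; apply: leq_ltn_trans hD _.
Qed.

Ltac try2 a b :=
  exists [set a; b]; split; last exact: card2_le;
  apply: cds2; [by apply: add_edge_sym; apply: g3_sym | by rewrite inE | by rewrite inE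
  | by simp; split_all; fin
  | move=> [[[|[|[|[|?]]]] Hr] k] _ //; simp; split_all; fin].

Lemma edge_crit s (Hs : 2 < s) u v : u != v -> ~~ g3 s u v ->
  exists2 k', k' < 3 & gamma_c_is (add_edge (g3 s) u v) setT k'.
Proof.
move: u v => [[[|[|[|[|?]]]] Hp] i] [[[|[|[|[|?]]]] Hq] j] // uv nuv; apply: ex_small;
split_all; try (by move: uv nuv; simp; fin);
first [ try2 (Ordinal Hp, j) (Ordinal Hq, j) | try2 (Ordinal Hp, i) (Ordinal Hq, j)
      | try2 (pT, i) (pR, j) | try2 (pW, i) (pZ, j) ].
Qed.

Ltac try2v a b :=
  exists [set a; b]; split; last exact: card2_le;
  apply: cds2; [by apply: g3_sym | by rewrite !inE; simp; split_all; fin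
  | by rewrite !inE; simp; split_all; fin
  | by simp; split_all; fin
  | move=> [[[|[|[|[|?]]]] Hr] k] //; rewrite !inE; simp; split_all; fin].

Lemma vert_cds s (Hs : 2 < s) v : exists D, is_cds (g3 s) (setT :\ v) D /\ #|D| <= 2.
Proof.
move: v => [[[|[|[|[|?]]]] Hp] i] //; have [j /andP[ji _]] := other2 Hs i i.
- try2v (pT, i) (pZ, j).
- try2v (pR, i) (pT, j).
- try2v (pZ, i) (pW, j).
- try2v (pW, i) (pR, j).
Qed.

Theorem lemma4p8 (s : nat) : 3 <= s -> maximal_vertex_critical (g3 s) 3.
Proof.
move=> Hs; have [g [D cD]] := gamma3 Hs.
split; first by split => // u v; apply: edge_crit.
split; last by split => // v; apply: ex_small; apply: vert_cds.
split; first by rewrite card_prod !card_ord; apply: leq_trans Hs _; rewrite leq_pmull.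
split; first exact: cds_conn (@g3_sym s) cD.
move=> v; have [D' [cD' _]] := vert_cds Hs v; exact: cds_conn (@g3_sym s) cD'.
Qed.
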